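(* Let $k\geq 2$ and let $G$ be a graph of order $n\geq 11k-4$ that does not contain $k\cdot P_3$ as a subgraph. Then $\lambda_n(G)\geq -\sqrt{(k-1)(n-k+1)}$, with equality if and only if $G=K_{k-1,n-k+1}$.
   Context: Graphs are finite and simple; $\lambda_n(G)$ denotes the least eigenvalue of the adjacency matrix of $G$. $P_3$ is the path on 3 vertices and $k\cdot P_3$ is the disjoint union of $k$ copies of $P_3$. $K_{a,b}$ is the complete bipartite graph with parts of sizes $a$ and $b$. *)

(* Defs.v *)
From HB Require Import structures.
From mathcomp Require Import all_boot all_order all_algebra.
From mathcomp Require Import polyrcf.
Set Implicit Arguments. Unset Strict Implicit. Unset Printing Implicit Defensive.
Import Order.TTheory GRing.Theory Num.Theory.
Local Open Scope ring_scope.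

Definition simple_graph (n : nat) (e : rel 'I_n) : Prop :=
  symmetric e /\ irreflexive e.

Definition adjmx (R : nzRingType) (n : nat) (e : rel 'I_n) : 'M[R]_n :=
  \matrix_(i, j) (e i j)%:R.

(* Least eigenvalue: the smallest real root of the characteristic polynomial
   (rootsR lists the roots in increasing order). For a real symmetric matrix
   all eigenvalues are real, so this is lambda_n. *)
Definition least_eigenvalue (R : rcfType) (n : nat) (A : 'M[R]_n) : R :=
  head 0 (rootsR (char_poly A)).

(* G contains k.P_3 as a (not necessarily induced) subgraph: an injective map of
   the vertices of k disjoint copies of P_3 (copy i has path (i,0)-(i,1)-(i,2))
   preserving edges. *)
Definition contains_kP3 (n k : nat) (e : rel 'I_n) : Prop :=
  exists f : 'I_k * 'I_3 -> 'I_n, injective f /\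
    forall i : 'I_k,
      e (f (i, inord 0)) (f (i, inord 1)) /\ e (f (i, inord 1)) (f (i, inord 2)).

(* G is (isomorphic to) the complete bipartite graph K_{a, n-a}: some set S of
   a vertices such that x ~ y iff exactly one of x, y lies in S. *)
Definition is_complete_bipartite (n a : nat) (e : rel 'I_n) : Prop :=
  exists S : {set 'I_n}, #|S| = a /\
    forall x y, e x y = ((x \in S) != (y \in S)).

(* Main.v *)
Require Import Defs.
From HB Require Import structures.
From mathcomp Require Import all_boot all_order all_algebra.
From mathcomp Require Import polyrcf.
From mathcomp Require Import zify ring lra.
From Stdlib Require Import Classical.
Set Implicit Arguments. Unset Strict Implicit. Unset Printing Implicit Defensive.
Import Order.TTheory GRing.Theory Num.Theory.

Section Pack.
Variable n : nat.
Implicit Types (h e : rel 'I_n).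

Lemma kP3_mono h e t : (forall i j, h i j -> e i j) -> contains_kP3 t h -> contains_kP3 t e.
Proof. move=> he [f [fi fp]]; exists f; split=> // i; have [? ?] := fp i; split; exact: he. Qed.

Definition tri (a b c : 'I_n) (j : 'I_3) : 'I_n :=
  if (j : nat) == 0%N then a else if (j : nat) == 1%N then b else c.

Lemma kP3_extend h t (f : 'I_t * 'I_3 -> 'I_n) a b c :
  injective f ->
  (forall i, h (f (i, inord 0)) (f (i, inord 1)) /\ h (f (i, inord 1)) (f (i, inord 2))) ->
  a != b -> b != c -> a != c ->
  (forall p, f p \notin [:: a; b; c]) ->
  h a b -> h b c -> contains_kP3 t.+1 h.
Proof.
move=> fi fp ab bc ac fn hab hbc.
pose g (p : 'I_t.+1 * 'I_3) : 'I_n :=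
  match unlift ord_max p.1 with Some i => f (i, p.2) | None => tri a b c p.2 end.
have triI : injective (tri a b c).
  move=> j1 j2; rewrite /tri.
  case: j1 j2 => [[|[|[|j1]]] ?] [[|[|[|j2]]] ?] //=;
    rewrite ?(eqxx) => e; try (apply: val_inj => //=);
    by move: ab bc ac; rewrite ?e ?eqxx.
exists g; split.
  move=> [i1 j1] [i2 j2]; rewrite /g /=.
  case: unliftP => [i1'|] -> ; case: unliftP => [i2'|] -> //.
  - by move/fi => [-> ->].
  - move=> e; have := fn (i1', j1); by rewrite e /tri !inE; case: ifP; rewrite ?eqxx //; case: ifP; rewrite ?eqxx ?orbT.
  - move=> e; have := fn (i2', j2); by rewrite -e /tri !inE; case: ifP; rewrite ?eqxx //; case: ifP; rewrite ?eqxx ?orbT.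
  - by move/triI ->.
move=> i; rewrite /g /=; case: unliftP => [i'|] _; first exact: fp.
by rewrite /tri !inordK.
Qed.

Lemma I3_cases (j : 'I_3) : j = inord 0 \/ j = inord 1 \/ j = inord 2.
Proof.
case: j => [[|[|[|m]]] Hm] //.
- by left; apply: val_inj; rewrite /= inordK.
- by right; left; apply: val_inj; rewrite /= inordK.
- by right; right; apply: val_inj; rewrite /= inordK.
Qed.

Lemma pack_endpoint h t (f : 'I_t * 'I_3 -> 'I_n) :
  (forall i, h (f (i, inord 0)) (f (i, inord 1)) /\ h (f (i, inord 1)) (f (i, inord 2))) ->
  forall p, exists w, h (f p) w || h w (f p).
Proof.
move=> fp [i j]; have [h1 h2] := fp i.
case: (I3_cases j) => [->|[->|->]].
- by exists (f (i, inord 1)); rewrite h1.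
- by exists (f (i, inord 2)); rewrite h2.
- by exists (f (i, inord 1)); rewrite h2 orbT.
Qed.

Lemma pack0 h (v0 : 'I_n) : contains_kP3 0 h.
Proof. by exists (fun _ => v0); split=> [[[]]|[]]. Qed.

Lemma max_pack h k (v0 : 'I_n) : ~ contains_kP3 k h ->
  exists t, (t < k)%N /\ contains_kP3 t h /\ ~ contains_kP3 t.+1 h.
Proof.
move=> nk.
suff: forall d t, (t + d)%N = k -> contains_kP3 t h ->
   exists t, (t < k)%N /\ contains_kP3 t h /\ ~ contains_kP3 t.+1 h.
  by move/(_ k 0%N); apply => //; apply: pack0.
elim=> [|d IH] t tk ct; first by move: ct; rewrite addn0 in tk; rewrite tk.
case: (classic (contains_kP3 t.+1 h)) => c1.
  by apply: (IH t.+1) => //; rewrite addSnnS.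
by exists t; split => //; rewrite -tk; lia.
Qed.

Lemma Kpq_pack (v0 : 'I_n) t : forall h (A B : {set 'I_n}), (forall x, x \in A -> x \in B -> False) ->
  (forall a b, a \in A -> b \in B -> h a b && h b a) ->
  (t <= #|A|)%N -> (t <= #|B|)%N -> (3 * t <= #|A| + #|B|)%N -> contains_kP3 t h.
Proof.
elim: t => [|t IH] h A B dAB cAB tA tB t3; first exact: pack0.
wlog BA : A B dAB cAB tA tB t3 / (#|B| <= #|A|)%N.
  move=> W; case: (leqP #|B| #|A|) => [Hle|/ltnW Hle]; first exact: (W A B dAB cAB tA tB t3 Hle).
  apply: (W B A) => //; last by lia.
    by move=> x xB xA; exact: (dAB x).
  by move=> a b aB bA; rewrite andbC cAB.
have /card_gt1P [a1 [a2 [a1A a2A a12]]] : (1 < #|A|)%N by lia.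
have /card_gt0P [b bB] : (0 < #|B|)%N by lia.
have nAB := dAB.
set A' := A :\: [set a1; a2]; set B' := B :\ b.
pose h' := [rel i j | [&& h i j, (i \in A' :|: B') & (j \in A' :|: B')]].
have cA' : #|A'| = (#|A| - 2)%N.
  rewrite /A' cardsDS ?cards2 ?a12 //.
  by apply/subsetP => x; rewrite !inE => /orP[]/eqP->.
have cB' : #|B'| = (#|B| - 1)%N by rewrite (cardsD1 b B) bB /= add1n subn1.
have : contains_kP3 t h'.
  apply: (IH h' A' B').
  - move=> x; rewrite /A' /B' !inE => /andP[_ xA] /andP[_ xB].
    exact: (nAB x).
  - move=> a b' aA bB'; move: (aA) (bB'); rewrite /A' /B' !inE => /andP[na aA0] /andP[nb bB0].
    rewrite /h' /= !inE na nb aA0 bB0 /= !orbT !andbT.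
    exact: cAB.
  - by rewrite cA'; lia.
  - by rewrite cB'; lia.
  - by rewrite cA' cB'; lia.
case=> f [fi fp].
have fp' : forall i, h (f (i, inord 0)) (f (i, inord 1)) /\ h (f (i, inord 1)) (f (i, inord 2)).
  by move=> i; have [/andP[-> _] /andP[-> _]] := fp i.
apply: (kP3_extend (f:=f) (a:=a1) (b:=b) (c:=a2)) => //.
- by apply/negP => /eqP e; apply: (nAB a1) => //; rewrite e.
- by apply/negP => /eqP e; apply: (nAB a2) => //; rewrite -e.
- move=> p; have [w Hw] := pack_endpoint fp p.
  have Hm : f p \in A' :|: B' by case/orP: Hw => /and3P[].
  move: Hm; rewrite /A' /B' !inE.
  case/orP => /andP[H1 H2]; apply/negP => /or3P[]/eqP e; move: H1 H2; rewrite e => H1 H2;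
   by [rewrite eqxx ?orbT in H1 | case: (nAB _ H2 bB) | case: (nAB _ a1A H2) | case: (nAB _ a2A H2) ].
- by case/andP: (cAB a1 b a1A bB).
- by case/andP: (cAB a2 b a2A bB).
Qed.

Definition deg h v : nat := \sum_w (h v w : nat).
Definition medges h (P : {set 'I_n}) : nat := \sum_(i in P) deg h i.

Lemma degE h v : deg h v = #|[set w | h v w]|.
Proof.
rewrite -sum1dep_card big_mkcond /deg; apply: eq_bigr => w _; by case: (h v w).
Qed.

Lemma sum_deg_cond h (Q : pred 'I_n) :
  \sum_(i | Q i) deg h i = \sum_i \sum_j ((Q i && h i j) : nat).
Proof.
rewrite big_mkcond; apply: eq_bigr => i _; rewrite /deg.
case: (Q i) => //=; by rewrite big1.
Qed.

Lemma handshake h (P : {set 'I_n}) : symmetric h ->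
  (forall i j, h i j -> (i \in P) != (j \in P)) ->
  \sum_i deg h i = 2 * medges h P.
Proof.
move=> hs hb.
rewrite (bigID (mem P)) /= mul2n -addnn; congr (_ + _).
rewrite sum_deg_cond.
have E : forall i j, (((i \notin P) && h i j) : nat) = (((j \in P) && h j i) : nat).
  move=> i j; rewrite (hs j i); case hij: (h i j); rewrite ?andbF ?andbT //.
  by move: (hb _ _ hij); case: (i \in P); case: (j \in P).
under eq_bigr do under eq_bigr do rewrite E.
by rewrite exchange_big /medges [RHS]sum_deg_cond.
Qed.

Definition hrem h v : rel 'I_n := [rel i j | [&& i != v, j != v & h i j]].

Lemma hrem_sym h v : symmetric h -> symmetric (hrem h v).
Proof. by move=> hs i j; rewrite /hrem /= hs andbA [(i != v) && _]andbC -andbA. Qed.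

Lemma sum_deg_rem h v : symmetric h -> irreflexive h ->
  \sum_i deg h i = \sum_i deg (hrem h v) i + 2 * deg h v.
Proof.
move=> hs hi.
have E : forall i j, (h i j : nat) = (hrem h v i j : nat) + ((i == v) && h i j) + ((j == v) && h i j).
  move=> i j; rewrite /hrem /=.
  case: (eqVneq i v) => [->|iv]; case: (eqVneq j v) => [->|jv] //=; rewrite ?hi ?addn0 //.
have E2 : \sum_i \sum_j (((j == v) && h i j) : nat) = deg h v.
  rewrite exchange_big /=; under eq_bigr do under eq_bigr do rewrite hs.
  by rewrite -sum_deg_cond big_pred1_eq.
rewrite /deg; under eq_bigr do under eq_bigr do rewrite E.
under eq_bigr do rewrite !big_split /=.
rewrite !big_split /= E2 -/(deg h v) -[X in _ + X + _ = _](sum_deg_cond h (pred1 v)) big_pred1_eq.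
by rewrite /deg; lia.
Qed.

Lemma medges_rem h (P : {set 'I_n}) (v : 'I_n) : symmetric h -> irreflexive h ->
  (forall i j, h i j -> (i \in P) != (j \in P)) ->
  medges h P = medges (hrem h v) P + deg h v.
Proof.
move=> hs hi hb.
have hb' : forall i j, hrem h v i j -> (i \in P) != (j \in P).
  by move=> i j /and3P[_ _ /hb].
have := sum_deg_rem v hs hi.
rewrite (handshake hs hb) (handshake (hrem_sym v hs) hb'); lia.
Qed.

Lemma outF_deg h t (f : 'I_t * 'I_3 -> 'I_n) :
  symmetric h -> irreflexive h -> injective f ->
  (forall i, h (f (i, inord 0)) (f (i, inord 1)) /\ h (f (i, inord 1)) (f (i, inord 2))) ->
  ~ contains_kP3 t.+1 h ->
  forall v, v \notin f @: setT -> (\sum_(w | w \notin f @: setT) (h v w : nat) <= 1)%N.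
Proof.
move=> hs hi fi fp nc v vF.
have -> : \sum_(w | w \notin f @: setT) (h v w : nat) = \sum_(w | (w \notin f @: setT) && h v w) 1.
  rewrite [RHS]big_mkcond [LHS]big_mkcond; apply: eq_bigr => w _.
  by case: (w \notin _); case: (h v w).
rewrite sum1dep_card; apply/card_le1_eqP => w1 w2; rewrite !inE => /andP[w1F hw1] /andP[w2F hw2].
case: (eqVneq w1 w2) => // w12; exfalso; apply: nc.
have d1 : w1 != v by apply/negP => /eqP e; move: hw1; rewrite e hi.
have d2 : v != w2 by apply/negP => /eqP e; move: hw2; rewrite -e hi.
have d3 : forall p, f p \notin [:: w1; v; w2].
  move=> p; have fpF : f p \in f @: setT by apply: imset_f.
  rewrite !inE; apply/negP => /or3P[]/eqP e; by [move: w1F; rewrite -e fpF | move: vF; rewrite -e fpF | move: w2F; rewrite -e fpF].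
have h1 : h w1 v by rewrite hs.
exact: (kP3_extend fi fp d1 d2 w12 d3 h1 hw2).
Qed.

Lemma leq_sum_cond (Q : pred 'I_n) (F : 'I_n -> nat) :
  (\sum_(i | Q i) F i <= \sum_i F i)%N.
Proof. by rewrite [X in (_ <= X)%N](bigID Q) /= leq_addr. Qed.

Lemma lowdeg h (U P : {set 'I_n}) t (f : 'I_t * 'I_3 -> 'I_n) D :
  symmetric h -> irreflexive h ->
  (forall i j, h i j -> (i \in U) && (j \in U)) ->
  (forall i j, h i j -> (i \in P) != (j \in P)) ->
  injective f ->
  (forall i, h (f (i, inord 0)) (f (i, inord 1)) /\ h (f (i, inord 1)) (f (i, inord 2))) ->
  ~ contains_kP3 t.+1 h -> (forall v, (deg h v <= D)%N) ->
  (2 * medges h P <= 2 * (3 * t * D) + (#|U| - 3 * t))%N.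
Proof.
move=> hs hi hU hb fi fp nc hD.
set F := f @: setT.
have cF : #|F| = (3 * t)%N by rewrite card_imset // cardsT card_prod !card_ord mulnC.
have FU : F \subset U.
  apply/subsetP => x /imsetP [p _ ->]; have [w Hw] := @pack_endpoint h t f fp p.
  by case/orP: Hw => /hU/andP[].
have SF : (\sum_(i in F) deg h i <= 3 * t * D)%N.
  by rewrite -cF -sum_nat_const; apply: leq_sum => i _; apply: hD.
rewrite -(handshake hs hb) (bigID (mem F)) /=.
have E1 : \sum_(i | i \notin F) deg h i =
    \sum_(i | i \notin F) \sum_(j in F) (h i j : nat) + \sum_(i | i \notin F) \sum_(j | j \notin F) (h i j : nat).
  rewrite -big_split /=; apply: eq_bigr => i _; by rewrite /deg (bigID (mem F)).
have B1 : (\sum_(i | i \notin F) \sum_(j in F) (h i j : nat) <= 3 * t * D)%N.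
  apply: leq_trans (leq_sum_cond _ _) _.
  rewrite exchange_big /=; apply: leq_trans SF; apply: leq_sum => j _.
  by rewrite /deg; under eq_bigr do rewrite hs.
have B2 : (\sum_(i | i \notin F) \sum_(j | j \notin F) (h i j : nat) <= #|U| - 3 * t)%N.
  rewrite -cF -cardsDS // -sum1_card.
  rewrite [X in (_ <= X)%N](eq_bigl (fun i => (i \notin F) && (i \in U))); last first.
    by move=> i; rewrite !inE andbC.
  rewrite [X in (_ <= X)%N]big_mkcond [X in (X <= _)%N]big_mkcond /=.
  apply: leq_sum => i _; case iF: (i \notin F) => //=.
  case iU: (i \in U); first exact: (outF_deg hs hi fi fp nc iF).
  rewrite big1 // => j _; case hij: (h i j) => //.
  by move: (hU _ _ hij); rewrite iU.
rewrite E1 mul2n -addnn -addnA; exact: (leq_add SF (leq_add B1 B2)).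
Qed.

Lemma sum3_le2 (g : 'I_3 -> bool) j0 : g j0 = false -> (\sum_j (g j : nat) <= 2)%N.
Proof.
move=> g0; rewrite (bigD1 j0) //= g0 add0n.
apply: leq_trans (_ : \sum_(j | j != j0) 1 <= 2)%N.
  by apply: leq_sum => j _; case: (g j).
by rewrite sum1dep_card (eq_card (B := predC1 j0)) ?cardC1 ?card_ord // => j; rewrite !inE.
Qed.

Lemma highdeg h (P : {set 'I_n}) v t :
  symmetric h -> irreflexive h ->
  (forall i j, h i j -> (i \in P) != (j \in P)) ->
  (2 * t + 2 <= deg h v)%N -> contains_kP3 t (hrem h v) -> contains_kP3 t.+1 h.
Proof.
move=> hs hi hb dv [f [fi fp]].
have fp' : forall i, h (f (i, inord 0)) (f (i, inord 1)) /\ h (f (i, inord 1)) (f (i, inord 2)).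
  by move=> i; have [/and3P[_ _ ->] /and3P[_ _ ->]] := fp i.
set F := f @: setT; set N := [set w | h v w].
have vF : v \notin F.
  apply/imsetP => [[p _ e]]; have [w Hw] := @pack_endpoint _ t f fp p.
  by case/orP: Hw => /and3P[]; rewrite -e eqxx.
have tri0 : forall a b, h v a -> h v b -> h a b -> False.
  move=> a b ha hb'; move: (hb _ _ ha) (hb _ _ hb') => h1 h2 /hb.
  by move: h1 h2; case: (v \in P); case: (a \in P); case: (b \in P).
have NF : (#|N :&: F| <= 2 * t)%N.
  set Z := [set p | f p \in N].
  have : N :&: F \subset f @: Z.
    apply/subsetP => x; rewrite inE => /andP[xN /imsetP [p _ e]].
    by apply/imsetP; exists p => //; rewrite inE -e.
  move/subset_leq_card/leq_trans; apply; apply: leq_trans (leq_imset_card _ _) _.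
  rewrite -sum1_card.
  have -> : \sum_(p in Z) 1 = \sum_(i : 'I_t) \sum_(j : 'I_3) ((f (i, j) \in N) : nat).
    rewrite pair_big big_mkcond; apply: eq_bigr => [[i j]] _ /=; rewrite inE; by case: (f (i, j) \in N).
  rewrite mulnC -[t in (t * 2)%N]card_ord -sum_nat_const.
  apply: leq_sum => i _.
  case e1: (f (i, inord 1) \in N); last by apply: (sum3_le2 (j0 := inord 1)).
  apply: (sum3_le2 (j0 := inord 0)); apply/negP => e0.
  move: e0 e1; rewrite !inE => e0 e1.
  by apply: (tri0 _ _ e0 e1); case: (fp' i).
have /card_gt1P [w1 [w2 [w1N w2N w12]]] : (1 < #|N :\: F|)%N.
  rewrite cardsD; move: dv; rewrite degE -/N; lia.
move: w1N w2N; rewrite !inE => /andP[w1F hw1] /andP[w2F hw2].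
have d1 : w1 != v by apply/negP => /eqP e; move: hw1; rewrite e hi.
have d2 : v != w2 by apply/negP => /eqP e; move: hw2; rewrite -e hi.
have d3 : forall p, f p \notin [:: w1; v; w2].
  move=> p; have fpF : f p \in F by apply: imset_f.
  rewrite !inE; apply/negP => /or3P[]/eqP e; by [move: w1F; rewrite -e fpF | move: vF; rewrite -e fpF | move: w2F; rewrite -e fpF].
have h1 : h w1 v by rewrite hs.
exact: (kP3_extend fi fp' d1 d2 w12 d3 h1 hw2).
Qed.

Lemma medges_le h (P W : {set 'I_n}) D :
  (forall i j, h i j -> i \in W) -> (forall i, i \in P -> (deg h i <= D)%N) ->
  (medges h P <= #|W :&: P| * D)%N.
Proof.
move=> hW hD; rewrite -sum_nat_const /medges.
rewrite (bigID (mem W)) /= [X in (_ <= X)%N](eq_bigl (fun i => (i \in P) && (i \in W))); last first.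
  by move=> i; rewrite !inE andbC.
rewrite [X in (_ + X)%N]big1 ?addn0; last first.
  move=> i /andP[_ iW]; apply/eqP; rewrite /deg sum_nat_eq0; apply/forallP => j; apply/implyP => _.
  by case hij: (h i j) => //; move: iW; rewrite (hW _ _ hij).
by apply: leq_sum => i /andP[iP _]; apply: hD.
Qed.

Lemma medges_compl h (P : {set 'I_n}) : symmetric h ->
  (forall i j, h i j -> (i \in P) != (j \in P)) -> medges h P = medges h (~: P).
Proof.
move=> hs hb.
have hb' : forall i j, h i j -> (i \in ~: P) != (j \in ~: P).
  by move=> i j /hb; rewrite !inE; case: (i \in P); case: (j \in P).
have := handshake hs hb; rewrite (handshake hs hb'); lia.
Qed.

Lemma deg_side h (U P : {set 'I_n}) i :
  (forall i j, h i j -> (i \in U) && (j \in U)) ->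
  (forall i j, h i j -> (i \in P) != (j \in P)) ->
  (deg h i <= if i \in P then #|U :\: P| else #|U :&: P|)%N.
Proof.
move=> hU hb; rewrite degE; case iP: (i \in P); apply: subset_leq_card; apply/subsetP => j; rewrite inE => hij;
have /andP[_ jU] := hU _ _ hij; have := hb _ _ hij;
by rewrite iP !inE jU; case: (j \in P).
Qed.
Lemma ar1 p q u k : p + q = u -> p <= k -> k <= q -> p * q <= k * (u - k).
Proof.
move=> Hu Hp Hq.
have [a Ha] : exists a, k = p + a by exists (k - p); lia.
subst k.
have [b Hb] : exists b, q = p + a + b by exists (q - (p + a)); lia.
subst q.
have -> : u - (p + a) = p + b by lia.
have -> : (p + a) * (p + b) = p * (p + a + b) + a * b by ring.
exact: leq_addr.
Qed.
Lemma ar2 m t u k : 2 * m <= 2 * (3 * t * (2 * k.+1 - 1)) + (u - 3 * t) -> t <= k -> 11 * k.+1 - 4 <= u -> 1 <= k -> m <= k * (u - k).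
Proof.
move=> H1 H2 H3 H4.
have E1 : 2 * (3 * t * (2 * k.+1 - 1)) + (u - 3 * t) = 3 * t * (4 * k + 1) + u.
  have -> : 2 * k.+1 - 1 = 2 * k + 1 by lia.
  have -> : 2 * (3 * t * (2 * k + 1)) = 3 * t * (4 * k + 1) + 3 * t by ring.
  have : 3 * t <= u.
    have : 3 * t <= 3 * k by rewrite leq_mul2l.
    lia.
  lia.
have E2 : 3 * t * (4 * k + 1) <= 3 * k * (4 * k + 1) by rewrite leq_mul2r leq_mul2l H2 !orbT.
have [r Hr] : exists r, u = 11 * k + 7 + r by exists (u - (11 * k + 7)); lia.
have E3 : k * (u - k) = 10 * (k * k) + 7 * k + k * r.
  have -> : u - k = 10 * k + 7 + r by lia.
  ring.
have E4 : 3 * k * (4 * k + 1) = 12 * (k * k) + 3 * k by ring.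
have kk : 1 <= k * k by rewrite muln_gt0 H4.
have kr : r <= k * r by rewrite leq_pmull.
lia.
Qed.

Lemma cardsD1_in (A : {set 'I_n}) v : v \in A -> #|A :\ v| = (#|A| - 1)%N.
Proof. by move=> vA; rewrite (cardsD1 v A) vA add1n subn1. Qed.

Lemma noP3_deg h (v0 : 'I_n) : symmetric h -> irreflexive h -> ~ contains_kP3 1 h ->
  forall x, (deg h x <= 1)%N.
Proof.
move=> hs hi nc x.
have [f0 [fi0 fp0]] := pack0 h v0.
have nF : forall w, w \notin f0 @: setT by move=> w; apply/imsetP => [[[[m Hm] j] _ _]].
have := outF_deg hs hi fi0 fp0 nc (nF x).
by rewrite /deg (eq_bigl xpredT) // => w; rewrite nF.
Qed.

Lemma combo k : (2 <= k)%N -> forall h (U P : {set 'I_n}), symmetric h ->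
  (forall i j, h i j -> (i \in U) && (j \in U)) ->
  (forall i j, h i j -> (i \in P) != (j \in P)) ->
  ~ contains_kP3 k h -> (11 * k - 4 <= #|U|)%N ->
  (medges h P <= (k - 1) * (#|U| - k + 1))%N.
Proof.
elim: k => // k IH k2 h U P hs hU hb nk uk.
have hi : irreflexive h by move=> i; apply/negP => /hb; rewrite eqxx.
have -> : ((k.+1 - 1) * (#|U| - k.+1 + 1) = k * (#|U| - k))%N.
  rewrite subn1 /=; congr (_ * _); have kU : (k < #|U|)%N by move: uk; set z := #|U|; lia.
  by rewrite addn1 subnSK.
have k1 : (1 <= k)%N by lia.
set u := #|U| in uk *.
set p := #|U :&: P|; set q := #|U :\: P|.
have pq : (p + q = u)%N by rewrite /p /q cardsID.
have mpq : (medges h P <= p * q)%N.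
  apply: medges_le => [i j /hU/andP[] //|i iP].
  by have := deg_side i hU hb; rewrite iP.
case: (leqP p k) => [pk|kp].
  by apply: leq_trans mpq (ar1 pq pk _); lia.
case: (leqP q k) => [qk|kq].
  by rewrite mulnC in mpq; apply: leq_trans mpq (ar1 _ qk _); lia.
case: (classic (exists v, 2 * k.+1 <= deg h v)%N) => [[v dv]|nod].
  have nkv : ~ contains_kP3 k (hrem h v).
    by move=> c; apply: nk; apply: (highdeg hs hi hb _ c); lia.
  have mr := @medges_rem h P v hs hi hb.
  have dvb : (deg h v <= u - k.+1)%N.
    have := deg_side v hU hb; case: (v \in P) => H; lia.
  have hvU : forall i j, hrem h v i j -> (i \in U :\ v) && (j \in U :\ v).
    by move=> i j /and3P[iv jv /hU/andP[iU jU]]; rewrite !inE iv jv iU jU.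
  have hvb : forall i j, hrem h v i j -> (i \in P) != (j \in P).
    by move=> i j /and3P[_ _ /hb].
  have hvs := hrem_sym v hs.
  have hvi : irreflexive (hrem h v) by move=> i; apply/negP => /hvb; rewrite eqxx.
  have vU : v \in U.
    have : (0 < deg h v)%N by lia.
    rewrite degE => /card_gt0P [w]; rewrite inE => /hU/andP[] //.
  case: (eqVneq k 1) => [k1e|kn1].
    subst k.
    have d1 := noP3_deg v hvs hvi nkv.
    case vP: (v \in P).
      have : (medges (hrem h v) P <= #|(U :\ v) :&: P| * 1)%N.
        by apply: medges_le => [i j /hvU/andP[] //|i _]; apply: d1.
      have : #|(U :\ v) :&: P| = (p - 1)%N.
        have -> : (U :\ v) :&: P = (U :&: P) :\ v by apply/setP => x; rewrite !inE andbA.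
        by rewrite cardsD1_in // inE vU vP.
      have := deg_side v hU hb; rewrite vP; lia.
    have : (medges (hrem h v) (~: P) <= #|(U :\ v) :&: ~: P| * 1)%N.
      by apply: medges_le => [i j /hvU/andP[] //|i _]; apply: d1.
    rewrite -(medges_compl hvs hvb).
    have : #|(U :\ v) :&: ~: P| = (q - 1)%N.
      have -> : (U :\ v) :&: ~: P = (U :\: P) :\ v by apply/setP => x; rewrite !inE; case: (x == v); case: (x \in P); case: (x \in U).
      by rewrite cardsD1_in // !inE vU vP.
    have := deg_side v hU hb; rewrite vP; lia.
  have k2' : (2 <= k)%N by lia.
  have := IH k2' (hrem h v) (U :\ v) P hvs hvU hvb nkv.
  have cUv : #|U :\ v| = (u - 1)%N by rewrite cardsD1_in.
  rewrite cUv => /(_ ltac:(lia)) H.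
  have E : (k * (u - k) = (k - 1) * (u - k) + (u - k))%N.
    by rewrite -{1}(subnK k1) mulnDl mul1n.
  have E2 : (u - 1 - k + 1 = u - k)%N by lia.
  rewrite E2 in H; lia.
have nod' : forall v, (deg h v <= 2 * k.+1 - 1)%N.
  move=> v; case: (leqP (deg h v) (2 * k.+1 - 1)) => // H; exfalso; apply: nod; exists v; lia.
have /card_gt0P [v0 _] : (0 < u)%N by lia.
have [t [tk [[f [fi fp]] nt]]] := max_pack v0 nk.
have := lowdeg hs hi hU hb fi fp nt nod'.
move/ar2; apply; lia.
Qed.
End Pack.
Lemma sq4 p q : 4 * (p * q) <= (p + q) ^ 2.
Proof.
wlog pq : p q / p <= q.
  move=> W; case: (leqP p q) => H; first exact: W.
  by rewrite (mulnC p q) (addnC p q); apply: W; apply: ltnW.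
have [d ->] : exists d, q = p + d by exists (q - p); lia.
have -> : (p + (p + d)) ^ 2 = 4 * (p * (p + d)) + d * d by ring.
exact: leq_addr.
Qed.

Lemma ar3 p q k n : p * q = (k - 1) * (n - k + 1) -> p + q <= n -> 11 * k - 4 <= n ->
  2 <= k -> k <= p -> k <= q -> 3 * k <= p + q.
Proof.
move=> E pq kn k2 kp kq; rewrite leqNgt; apply/negP => H.
have [j Hj] : exists j, k = j + 2 by exists (k - 2); lia.
subst k.
have H1 : (p + q) ^ 2 <= (3 * j + 5) ^ 2 by rewrite leq_sqr; lia.
have H2 : (j + 1) * (10 * j + 17) <= (j + 2 - 1) * (n - (j + 2) + 1).
  by rewrite leq_mul //; lia.
have E1 : (3 * j + 5) ^ 2 = 9 * (j * j) + 30 * j + 25 by ring.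
have E2 : (j + 1) * (10 * j + 17) = 10 * (j * j) + 27 * j + 17 by ring.
have := sq4 p q; rewrite E; lia.
Qed.

Lemma ar4 p q K M : p * q = K * M -> p + q <= K + M -> p <= K -> K <= M -> 0 < K -> p = K /\ q = M.
Proof.
move=> E pq pK KM K0.
case: (ltnP p K) => H; last first.
  have pK' : p = K by lia.
  subst p; split => //; apply/eqP; by rewrite -(eqn_pmul2l K0) E.
exfalso.
have [a Ha] : exists a, K = p + a.+1 by exists (K - p).-1; lia.
subst K.
have h1 : p * q <= p * (a.+1 + M) by rewrite leq_mul2l; apply/orP; right; lia.
have h2 : p * a.+1 < M * a.+1 by rewrite ltn_pmul2r //; lia.
have E1 : p * (a.+1 + M) = p * a.+1 + p * M by ring.
have E2 : (p + a.+1) * M = p * M + M * a.+1 by ring.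
lia.
Qed.


Local Open Scope ring_scope.

Section CS.
Variable R : rcfType.

Lemma CS (I : finType) (Q : pred I) (a b : I -> R) :
  (\sum_(i | Q i) a i * b i) ^+ 2 <= (\sum_(i | Q i) a i ^+ 2) * (\sum_(i | Q i) b i ^+ 2).
Proof.
have H : 0 <= \sum_(i | Q i) \sum_(j | Q j) (a i * b j - a j * b i) ^+ 2.
  by apply: sumr_ge0 => i _; apply: sumr_ge0 => j _; apply: sqr_ge0.
have E : forall i j, (a i * b j - a j * b i) ^+ 2 =
    a i ^+ 2 * b j ^+ 2 + a j ^+ 2 * b i ^+ 2 - 2 * ((a i * b i) * (a j * b j)).
  by move=> i j; ring.
have EE : \sum_(i | Q i) \sum_(j | Q j) (a i * b j - a j * b i) ^+ 2 =
   \sum_(i | Q i) \sum_(j | Q j) a i ^+ 2 * b j ^+ 2 + \sum_(i | Q i) \sum_(j | Q j) a j ^+ 2 * b i ^+ 2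
   - \sum_(i | Q i) \sum_(j | Q j) 2 * ((a i * b i) * (a j * b j)).
  under eq_bigr do under eq_bigr do rewrite E.
  under eq_bigr do rewrite sumrB big_split /=.
  by rewrite sumrB big_split.
rewrite EE in H.
have E1 : \sum_(i | Q i) \sum_(j | Q j) a i ^+ 2 * b j ^+ 2 =
   (\sum_(i | Q i) a i ^+ 2) * (\sum_(i | Q i) b i ^+ 2).
  by rewrite mulr_suml; apply: eq_bigr => i _; rewrite mulr_sumr.
have E2 : \sum_(i | Q i) \sum_(j | Q j) a j ^+ 2 * b i ^+ 2 =
   (\sum_(i | Q i) a i ^+ 2) * (\sum_(i | Q i) b i ^+ 2).
  by rewrite exchange_big /= E1.
have E3 : \sum_(i | Q i) \sum_(j | Q j) 2 * ((a i * b i) * (a j * b j)) =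
   2 * (\sum_(i | Q i) a i * b i) ^+ 2.
  rewrite [X in _ = 2 * X]expr2 mulr_suml mulr_sumr; apply: eq_bigr => i _.
  rewrite mulr_sumr mulr_sumr; apply: eq_bigr => j _; ring.
rewrite E1 E2 E3 in H; lra.
Qed.

End CS.

Section Quad.
Variables (R : rcfType) (n : nat) (e : rel 'I_n) (x : 'I_n -> R).
Hypothesis es : symmetric e.

Definition Qf := \sum_i \sum_j (e i j)%:R * x i * x j.
Definition nrm := \sum_i x i ^+ 2.
Definition hx : rel 'I_n := [rel i j | e i j && (x i * x j < 0)].
Definition Px : {set 'I_n} := [set i | 0 < x i].
Definition y i := `|x i|.
Definition Tf := \sum_(i in Px) \sum_j (hx i j)%:R * y i * y j.
Definition Ef := \sum_i \sum_j (e i j && ~~ (x i * x j < 0))%:R * x i * x j.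

Lemma hx_sym : symmetric hx.
Proof. by move=> i j; rewrite /hx /= es mulrC. Qed.

Lemma hx_bip i j : hx i j -> (i \in Px) != (j \in Px).
Proof.
case/andP=> _; rewrite !inE.
case: (ltrgt0P (x i)) => xi.
- by rewrite pmulr_rlt0 // => xj; rewrite ltNge (ltW xj).
- by rewrite nmulr_rlt0 // => ->.
- by rewrite xi mul0r ltxx.
Qed.

Lemma hx_in i j : i \in Px -> hx i j -> x j < 0.
Proof. by rewrite inE => xi /andP[_]; rewrite pmulr_rlt0. Qed.

Lemma handshakeR (F : 'I_n -> 'I_n -> R) (P : {set 'I_n}) :
  (forall i j, F i j = F j i) -> (forall i j, (i \in P) = (j \in P) -> F i j = 0) ->
  \sum_i \sum_j F i j = 2 * \sum_(i in P) \sum_j F i j.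
Proof.
move=> Fs F0.
rewrite (bigID (mem P)) /= mulr2n mulrDl mul1r; congr (_ + _).
have E1 : forall i, i \notin P -> \sum_j F i j = \sum_(j in P) F i j.
  move=> i iP; rewrite [LHS](bigID (mem P)) /= [X in _ + X]big1 ?addr0 // => j jP.
  by apply: F0; rewrite (negPf iP) (negPf jP).
have E2 : forall i, i \in P -> \sum_j F i j = \sum_(j | j \notin P) F i j.
  move=> i iP; rewrite [LHS](bigID (fun j => j \notin P)) /= [X in _ + X]big1 ?addr0 // => j.
  by rewrite negbK => jP; apply: F0; rewrite iP jP.
rewrite (eq_bigr _ E1) exchange_big /=; apply: eq_bigr => i iP.
by rewrite E2 //; apply: eq_bigr => j _; rewrite Fs.
Qed.

Lemma Q_split : Qf = - (2 * Tf) + Ef.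
Proof.
have E : forall i j, (e i j)%:R * x i * x j =
   - ((hx i j)%:R * y i * y j) + (e i j && ~~ (x i * x j < 0))%:R * x i * x j.
  move=> i j; rewrite /hx /y /=; case: (e i j) => /=; last by rewrite !mul0r oppr0 addr0.
  case: ltP => H /=; last by rewrite !mul0r oppr0 add0r.
  by rewrite !mul1r !mul0r addr0 -normrM ltr0_norm ?opprK.
rewrite /Qf; under eq_bigr do under eq_bigr do rewrite E.
under eq_bigr do rewrite big_split /=.
rewrite big_split /= -/Ef; congr (_ + _).
under eq_bigr do rewrite sumrN.
rewrite sumrN; congr (- _).
apply: handshakeR => [i j|i j ij]; first by rewrite hx_sym /y; ring.
case hij: (hx i j); last by rewrite !mul0r.
by move: (hx_bip hij); rewrite ij eqxx.
Qed.

Lemma Ef_ge0 : 0 <= Ef.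
Proof.
apply: sumr_ge0 => i _; apply: sumr_ge0 => j _.
case: (e i j) => /=; last by rewrite !mul0r.
by case: ltP => H /=; rewrite ?mul0r ?mul1r.
Qed.

Definition Uf := \sum_(i in Px) y i ^+ 2.
Definition Vf := \sum_(j in ~: Px) y j ^+ 2.
Definition wf j := \sum_(i in Px) (hx i j)%:R * y i.
Definition Wf := \sum_(j in ~: Px) wf j ^+ 2.
Definition dd j := \sum_(i in Px) ((hx i j)%:R : R).
Definition Uj j := \sum_(i in Px) (hx i j)%:R * y i ^+ 2.
Definition mm := medges hx Px.

Lemma y_ge0 i : 0 <= y i. Proof. exact: normr_ge0. Qed.

Lemma nrm_UV : nrm = Uf + Vf.
Proof.
rewrite /nrm (bigID (mem Px)) /=; congr (_ + _); apply: eq_big => i //.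
  by rewrite /y real_normK ?num_real.
by rewrite !inE.
by move=> _; rewrite /y real_normK ?num_real.
Qed.

Lemma T_eq : Tf = \sum_(j in ~: Px) y j * wf j.
Proof.
have E : forall i, i \in Px -> \sum_j (hx i j)%:R * y i * y j = \sum_(j in ~: Px) (hx i j)%:R * y i * y j.
  move=> i iP; rewrite (bigID (mem (~: Px))) /= [X in _ + X]big1 ?addr0 // => j.
  rewrite !inE negbK => jP; case hij: (hx i j); last by rewrite !mul0r.
  by move: (hx_bip hij); rewrite iP inE jP.
rewrite /Tf (eq_bigr _ E) exchange_big /=; apply: eq_bigr => j _.
rewrite /wf mulr_sumr; apply: eq_bigr => i _; ring.
Qed.

Lemma T_ge0 : 0 <= Tf.
Proof.
apply: sumr_ge0 => i _; apply: sumr_ge0 => j _.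
by rewrite mulr_ge0 ?mulr_ge0 ?y_ge0 ?ler0n.
Qed.

Lemma U_ge0 : 0 <= Uf. Proof. by apply: sumr_ge0 => i _; apply: sqr_ge0. Qed.
Lemma V_ge0 : 0 <= Vf. Proof. by apply: sumr_ge0 => i _; apply: sqr_ge0. Qed.
Lemma dd_ge0 j : 0 <= dd j. Proof. by apply: sumr_ge0 => i _; apply: ler0n. Qed.

Lemma CS1 : Tf ^+ 2 <= Vf * Wf.
Proof. by rewrite T_eq; apply: CS. Qed.

Lemma CS2 j : wf j ^+ 2 <= dd j * Uj j.
Proof.
have := CS (mem Px) (fun i => ((hx i j)%:R : R)) (fun i => (hx i j)%:R * y i).
have -> : \sum_(i in Px) (hx i j)%:R * ((hx i j)%:R * y i) = wf j.
  by apply: eq_bigr => i _; case: (hx i j); rewrite ?mul1r ?mul0r.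
have -> : \sum_(i in Px) ((hx i j)%:R : R) ^+ 2 = dd j.
  by apply: eq_bigr => i _; case: (hx i j); rewrite ?expr1n ?expr0n.
have -> : \sum_(i in Px) ((hx i j)%:R * y i) ^+ 2 = Uj j.
  by apply: eq_bigr => i _; case: (hx i j); rewrite ?mul1r ?mul0r ?expr0n.
done.
Qed.

Lemma Uj_le j : Uj j <= Uf.
Proof.
apply: ler_sum => i _; case: (hx i j); rewrite ?mul1r ?mul0r //; exact: sqr_ge0.
Qed.

Lemma mm_eq : (mm%:R : R) = \sum_(j in ~: Px) dd j.
Proof.
rewrite /mm /medges natr_sum /dd exchange_big /=; apply: eq_bigr => i iP.
rewrite /deg natr_sum (bigID (mem (~: Px))) /= [X in _ + X]big1 ?addr0 // => j.
rewrite !inE negbK => jP; case hij: (hx i j) => //.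
by move: (hx_bip hij); rewrite iP inE jP.
Qed.

Lemma W_le : Wf <= Uf * mm%:R.
Proof.
rewrite mm_eq mulr_sumr; apply: ler_sum => j _.
apply: le_trans (CS2 j) _; rewrite mulrC; apply: ler_wpM2r; [exact: dd_ge0 | exact: Uj_le].
Qed.

Lemma side_full : Wf = Uf * mm%:R -> forall j, j \in ~: Px ->
  (exists2 i, i \in Px & hx i j) -> forall i, i \in Px -> hx i j.
Proof.
move=> WE j jP [i0 i0P hi0] i iP.
have le_j : forall j, wf j ^+ 2 <= dd j * Uf.
  move=> j'; apply: le_trans (CS2 j') _; apply: ler_wpM2l; [exact: dd_ge0 | exact: Uj_le].
have S0 : \sum_(j in ~: Px) (dd j * Uf - wf j ^+ 2) = 0.
  rewrite sumrB -mulr_suml -mm_eq -/Wf WE; ring.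
have Ej : dd j * Uf - wf j ^+ 2 = 0.
  move: jP; apply: (psumr_eq0P _ S0) => j' _; rewrite subr_ge0; exact: le_j.
have dj : 0 < dd j.
  rewrite /dd (bigD1 i0) //= hi0 ltr_pwDl ?ltr01 //.
  by apply: sumr_ge0 => k _; apply: ler0n.
have UjE : Uj j = Uf.
  have h1 : dd j * Uf <= dd j * Uj j.
    by move/eqP: Ej; rewrite subr_eq0 => /eqP ->; apply: CS2.
  apply/eqP; rewrite eq_le Uj_le /=.
  by rewrite -(ler_pM2l dj).
have S1 : \sum_(k in Px) (y k ^+ 2 - (hx k j)%:R * y k ^+ 2) = 0.
  by rewrite sumrB -/Uf -/(Uj j) UjE subrr.
have Ei : y i ^+ 2 - (hx i j)%:R * y i ^+ 2 = 0.
  move: iP; apply: (psumr_eq0P _ S1) => k _.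
  case: (hx k j); rewrite ?mul1r ?subrr ?mul0r ?subr0 //; exact: sqr_ge0.
move: Ei.
have yp : 0 < y i by rewrite /y normr_gt0; move: iP; rewrite inE => /gt_eqF ->.
case: (hx i j) => //.
rewrite mul0r subr0 => /eqP; rewrite sqrf_eq0 => /eqP y0.
by move: yp; rewrite y0 ltxx.
Qed.
End Quad.

Section Core.
Variable R : rcfType.

Lemma core (T U V W m c : R) : 0 <= T -> 0 <= U -> 0 <= V -> 0 <= c ->
  T ^+ 2 <= V * W -> W <= U * m -> m <= c ^+ 2 ->
  2 * T <= c * (U + V) /\
  (2 * T = c * (U + V) -> 0 < U + V -> 0 < c -> [/\ m = c ^+ 2, U = V & W = U * m]).
Proof.
move=> T0 U0 V0 c0 h1 h2 h3.
have h4 : V * W <= V * (U * m) by apply: ler_wpM2l.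
have h5 : V * (U * m) <= V * (U * c ^+ 2) by apply: ler_wpM2l => //; apply: ler_wpM2l.
have h6 : 4 * (V * (U * c ^+ 2)) <= (c * (U + V)) ^+ 2.
  have : 0 <= c ^+ 2 * (U - V) ^+ 2 by apply: mulr_ge0; apply: sqr_ge0.
  move=> H; rewrite -subr_ge0; apply: le_trans H _; rewrite le_eqVlt; apply/orP; left; apply/eqP; ring.
have h7 : (2 * T) ^+ 2 <= (c * (U + V)) ^+ 2.
  have -> : (2 * T) ^+ 2 = 4 * T ^+ 2 by ring.
  lra.
have le1 : 2 * T <= c * (U + V).
  by rewrite -ler_sqr // nnegrE ?mulr_ge0 ?addr_ge0.
split => // eq1 N0 cp.
have eq2 : (2 * T) ^+ 2 = (c * (U + V)) ^+ 2 by rewrite eq1.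
have e6 : 4 * (V * (U * c ^+ 2)) = (c * (U + V)) ^+ 2.
  have E : (2 * T) ^+ 2 = 4 * T ^+ 2 by ring.
  rewrite E in eq2; lra.
have UV : U = V.
  have : c ^+ 2 * (U - V) ^+ 2 = 0.
    rewrite -e6 in h6 *; apply/eqP; rewrite -subr_eq0; apply/eqP.
    have -> : c ^+ 2 * (U - V) ^+ 2 - 0 = (c * (U + V)) ^+ 2 - 4 * (V * (U * c ^+ 2)) by ring.
    by rewrite e6 subrr.
  move/eqP; rewrite mulf_eq0 sqrf_eq0 sqrf_eq0 subr_eq0 => /orP[/eqP c00|/eqP //].
  by move: cp; rewrite c00 ltxx.
subst V.
have Up : 0 < U by lra.
have UUp : 0 < U * U by apply: mulr_gt0.
have e4 : U * W = U * (U * m) by lra.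
have e5 : U * (U * m) = U * (U * c ^+ 2) by lra.
have mc : m = c ^+ 2.
  by rewrite !mulrA -(mulrA _ c c) -expr2 in e5; exact: (mulfI (lt0r_neq0 UUp) e5).
split => //.
exact: (mulfI (lt0r_neq0 Up)).
Qed.
End Core.

Section Main.
Variables (R : rcfType) (k n : nat) (e : rel 'I_n).
Hypotheses (eS : simple_graph e) (k2 : (2 <= k)%N) (kn : (11 * k - 4 <= n)%N)
  (nk : ~ contains_kP3 k e).

Definition ab := ((k - 1) * (n - k + 1))%N.
Definition cc : R := Num.sqrt (ab%:R).

Lemma es : symmetric e. Proof. by case: eS. Qed.

Lemma cc2 : cc ^+ 2 = ab%:R.
Proof. by rewrite sqr_sqrtr ?ler0n. Qed.

Lemma cc_gt0 : 0 < cc.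
Proof. by rewrite sqrtr_gt0 ltr0n /ab muln_gt0; apply/andP; split; lia. Qed.

Lemma mm_le (x : 'I_n -> R) : (mm e x <= ab)%N.
Proof.
have := @combo n k k2 (hx e x) setT (Px x) (hx_sym x es) _ (@hx_bip _ _ e x).
rewrite cardsT card_ord; apply => //.
  by move=> i j _; rewrite !in_setT.
move=> c; apply: nk; move: c; apply: kP3_mono => i j /andP[] //.
Qed.

Lemma quad_le (x : 'I_n -> R) : - cc * nrm x <= Qf e x.
Proof.
have mc : (mm e x)%:R <= cc ^+ 2 :> R by rewrite cc2 ler_nat mm_le.
have [le _] := core (T_ge0 e x) (U_ge0 x) (V_ge0 x) (ltW cc_gt0) (CS1 e x) (W_le e x) mc.
rewrite (Q_split x es) nrm_UV; have := Ef_ge0 e x; lra.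
Qed.

Lemma eq_conseq (x : 'I_n -> R) : Qf e x = - cc * nrm x -> 0 < nrm x ->
  [/\ mm e x = ab, Ef e x = 0, 0 < Tf e x &
   forall j, j \in ~: Px x -> (exists2 i, i \in Px x & hx e x i j) -> forall i, i \in Px x -> hx e x i j].
Proof.
move=> QE N0.
have mc : (mm e x)%:R <= cc ^+ 2 :> R by rewrite cc2 ler_nat mm_le.
have [le eqc] := core (T_ge0 e x) (U_ge0 x) (V_ge0 x) (ltW cc_gt0) (CS1 e x) (W_le e x) mc.
have QS := Q_split x es; have E0 := Ef_ge0 e x.
rewrite nrm_UV in QE N0.
have T2 : 2 * Tf e x = cc * (Uf x + Vf x) by lra.
have [mE UV WE] := eqc T2 N0 cc_gt0.
have Tp : 0 < Tf e x.
  have : 0 < cc * (Uf x + Vf x) by apply: mulr_gt0 => //; exact: cc_gt0.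
  lra.
split => //; last exact: side_full.
  by apply/eqP; rewrite -(eqr_nat R) mE cc2.
lra.
Qed.
End Main.

Section Struct.
Variables (R : rcfType) (k n : nat) (e : rel 'I_n).
Hypotheses (eS : simple_graph e) (k2 : (2 <= k)%N) (kn : (11 * k - 4 <= n)%N)
  (nk : ~ contains_kP3 k e).

Lemma eq_struct (x : 'I_n -> R) : Qf e x = - cc R k n * nrm x -> (exists i, x i != 0) ->
  is_complete_bipartite (k - 1) e.
Proof.
move=> QE [i0 xi0].
have es := es eS.
have N0 : 0 < nrm x.
  rewrite /nrm (bigD1 i0) //=.
  have : 0 < x i0 ^+ 2 by rewrite lt0r sqrf_eq0 xi0 sqr_ge0.
  have : 0 <= \sum_(i | i != i0) x i ^+ 2 by apply: sumr_ge0 => i _; apply: sqr_ge0.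
  lra.
have [mE E0 Tp side1] := eq_conseq eS k2 kn nk QE N0.
pose x' := fun i => - x i.
have hxE : forall i j, hx e x' i j = hx e x i j by move=> i j; rewrite /hx /= /x' mulrNN.
have QE' : Qf e x' = - cc R k n * nrm x'.
  have -> : nrm x' = nrm x by apply: eq_bigr => i _; rewrite /x' sqrrN.
  rewrite -QE; apply: eq_bigr => i _; apply: eq_bigr => j _; rewrite /x'; ring.
have N0' : 0 < nrm x' by rewrite (_ : nrm x' = nrm x) // ; apply: eq_bigr => i _; rewrite /x' sqrrN.
have [_ _ _ side2] := eq_conseq eS k2 kn nk QE' N0'.
have PxE : forall i, (i \in Px x') = (x i < 0) by move=> i; rewrite inE /x' oppr_gt0.
have [i1 [j1 /andP[i1P hij1]]] : exists i j, (i \in Px x) && hx e x i j.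
  apply: NNPP => H; move: Tp; rewrite /Tf big1 ?ltxx // => i iP; apply: big1 => j _.
  case hij: (hx e x i j); last by rewrite !mul0r.
  by exfalso; apply: H; exists i, j; rewrite iP hij.
have xj1 : x j1 < 0 := hx_in i1P hij1.
have nPj1 : j1 \in ~: Px x by rewrite !inE -leNgt ltW.
have A1 : forall i, i \in Px x -> hx e x i j1 := side1 j1 nPj1 (ex_intro2 _ _ i1 i1P hij1).
have cmpl : forall i j, 0 < x i -> x j < 0 -> hx e x i j.
  move=> i j xi xj.
  have iP : i \in Px x by rewrite inE.
  have iP' : i \in ~: Px x' by rewrite !inE /x' oppr_gt0 -leNgt ltW.
  have ex2 : exists2 j', j' \in Px x' & hx e x' j' i.
    by exists j1; rewrite ?PxE // hxE hx_sym // A1.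
  have := side2 i iP' ex2 j; rewrite PxE xj hxE hx_sym //; exact.
pose Pn := [set j | x j < 0].
have degi : forall i, i \in Px x -> deg (hx e x) i = #|Pn|.
  move=> i iP; rewrite degE; apply: eq_card => j; rewrite !inE.
  apply/idP/idP => [|xj]; first exact: hx_in.
  by apply: cmpl => //; move: iP; rewrite inE.
have pq : (#|Px x| * #|Pn| = ab k n)%N.
  rewrite -mE /mm /medges (eq_bigr _ degi) sum_nat_const //.
have dPP : forall j, j \in Px x -> j \in Pn -> False.
  by move=> j; rewrite !inE => a b; move: (lt_trans a b); rewrite ltxx.
have cU : #|Px x :|: Pn| = (#|Px x| + #|Pn|)%N.
  rewrite cardsU (_ : Px x :&: Pn = set0) ?cards0 ?subn0 //.
  by apply/setP => j; rewrite !inE; apply/negP => /andP[a b]; apply: (dPP j); rewrite inE.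
have pqn : (#|Px x| + #|Pn| <= n)%N.
  by rewrite -cU; apply: leq_trans (max_card _) _; rewrite card_ord.
have noK : ~ [/\ (k <= #|Px x|)%N, (k <= #|Pn|)%N & (3 * k <= #|Px x| + #|Pn|)%N].
  case=> a b c; apply: nk.
  apply: (@Kpq_pack _ i0 k e (Px x) Pn) => //.
  move=> a' b'; rewrite !inE => xa xb.
  have := cmpl _ _ xa xb => /andP[ea _]; by rewrite ea es.
set p := #|Px x| in pq cU pqn noK degi *; set q := #|Pn| in pq cU pqn noK degi *.
have small : (p <= k - 1)%N \/ (q <= k - 1)%N.
  case: (leqP k p) => kp; last by left; lia.
  case: (leqP k q) => kq; last by right; lia.
  by exfalso; apply: noK; split => //; apply: (ar3 pq pqn kn k2 kp kq).
have KM : (k - 1 <= n - k + 1)%N by lia.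
have K0 : (0 < k - 1)%N by lia.
have KMn : (k - 1 + (n - k + 1) = n)%N by lia.
have pqn' : (p + q <= k - 1 + (n - k + 1))%N by rewrite KMn.
have pqn2 : (q + p <= k - 1 + (n - k + 1))%N by rewrite KMn addnC.
have cases : (p = k - 1 /\ q = n - k + 1)%N \/ (q = k - 1 /\ p = n - k + 1)%N.
  case: small => H; [left | right].
    exact: ar4 pq pqn' H KM K0.
  by apply: ar4 _ pqn2 H KM K0; rewrite mulnC.
have pqE : (p + q = n)%N by case: cases => [[-> ->]|[-> ->]]; lia.
have all0 : forall i, (0 < x i) || (x i < 0).
  move=> i; have : i \in Px x :|: Pn.
    have -> : Px x :|: Pn = setT.
      by apply/eqP; rewrite eqEcard subsetT /= cardsT card_ord cU pqE.
    by rewrite in_setT.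
  by rewrite !inE.
have Eterm : forall i j, (e i j && ~~ (x i * x j < 0))%:R * x i * x j = 0.
  move=> i j.
  have Fge : forall i2 j2, 0 <= (e i2 j2 && ~~ (x i2 * x j2 < 0))%:R * x i2 * x j2.
    by move=> i2 j2; case: (e i2 j2) => /=; [case: ltP => H /=; rewrite ?mul0r ?mul1r | rewrite !mul0r].
  have Ei : \sum_j0 (e i j0 && ~~ (x i * x j0 < 0))%:R * x i * x j0 = 0.
    move: (isT : true); apply: (psumr_eq0P _ E0) => i2 _; apply: sumr_ge0 => j2 _; exact: Fge.
  move: (isT : true); apply: (psumr_eq0P _ Ei) => j2 _; exact: Fge.
have eh : forall i j, e i j = ((0 < x i) != (0 < x j)).
  move=> i j; apply/idP/idP => [eij|ne].
    have := Eterm i j; rewrite eij /=.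
    case: ltP => H /=.
      by move=> _; have := @hx_bip _ _ e x i j; rewrite !inE; apply; rewrite /hx /= eij H.
    rewrite mul1r => /eqP; rewrite mulf_eq0 => /orP[] /eqP z.
      by move: (all0 i); rewrite z ltxx.
    by move: (all0 j); rewrite z ltxx.
  have : hx e x i j.
    move: ne (all0 i) (all0 j); case: (ltP 0 (x i)) => xi; case: (ltP 0 (x j)) => xj //= _ xi' xj'.
      exact: cmpl.
    by rewrite hx_sym //; apply: cmpl.
  by case/andP.
case: cases => [[pE qE]|[qE pE]].
- exists (Px x); split => //.
  by move=> i j; rewrite eh !inE.
- exists Pn; split => //.
  move=> i j; rewrite eh !inE.
  by move: (all0 i) (all0 j); case: (ltrgt0P (x i)); case: (ltrgt0P (x j)).
Qed.
End Struct.


Section Glue.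
Variables (R : rcfType) (n : nat) (e : rel 'I_n).

Lemma eig_quad (l : R) : root (char_poly (adjmx R e)) l ->
  exists x : 'I_n -> R, (exists i, x i != 0) /\ Qf e x = l * nrm x.
Proof.
rewrite -eigenvalue_root_char => /eigenvalueP [v vE vn0].
exists (fun i => v 0 i); split.
  apply: NNPP => H; move/eqP: vn0; apply; apply/rowP => i; rewrite mxE.
  apply/eqP; apply: NNPP => H'; apply: H; exists i; exact/negP.
have E : forall j, \sum_i v 0 i * (e i j)%:R = l * v 0 j.
  move=> j; have := congr1 (fun M : 'rV[R]_n => M 0 j) vE; rewrite !mxE /= => <-.
  by apply: eq_bigr => i _; rewrite /adjmx mxE.
have : \sum_j (\sum_i v 0 i * (e i j)%:R) * v 0 j = \sum_j l * v 0 j * v 0 j.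
  by apply: eq_bigr => j _; rewrite E.
rewrite /nrm mulr_sumr /Qf => H.
have -> : \sum_i l * v 0 i ^+ 2 = \sum_j l * v 0 j * v 0 j.
  by apply: eq_bigr => i _; rewrite expr2 mulrA.
rewrite -H exchange_big /=; apply: eq_bigr => i _; rewrite mulr_suml.
by apply: eq_bigr => j _; ring.
Qed.

Lemma rootsR_char l : l \in rootsR (char_poly (adjmx R e)) = root (char_poly (adjmx R e)) l.
Proof.
have nz : char_poly (adjmx R e) != 0 by apply: monic_neq0; apply: char_poly_monic.
by rewrite -(roots_on_rootsR nz l) itv_boundlr.
Qed.

Lemma head_le (s : seq R) y : sorted <%R s -> y \in s -> head 0 s <= y.
Proof.
case: s => // a s /= /(order_path_min lt_trans) /allP H.
rewrite inE => /orP[/eqP -> //|ys]; exact: ltW (H _ ys).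
Qed.

Lemma kab_root (k : nat) : (2 <= k)%N -> (k <= n)%N -> is_complete_bipartite (k - 1) e ->
  root (char_poly (adjmx R e)) (- cc R k n).
Proof.
move=> k2 kn [S [cS eE]].
set a : R := (k - 1)%:R; set b : R := (n - k + 1)%:R.
have a0 : 0 <= a by rewrite ler0n.
have b0 : 0 < b by rewrite ltr0n; lia.
have ccE : cc R k n = Num.sqrt a * Num.sqrt b by rewrite /cc /ab natrM sqrtrM.
have sb2 : Num.sqrt b * Num.sqrt b = b by rewrite -expr2 sqr_sqrtr // ltW.
have sa2 : Num.sqrt a * Num.sqrt a = a by rewrite -expr2 sqr_sqrtr.
have cSc : #|~: S| = (n - k + 1)%N by rewrite cardsCs setCK card_ord cS; lia.
pose v : 'rV[R]_n := \row_i (if i \in S then Num.sqrt b else - Num.sqrt a).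
rewrite -eigenvalue_root_char; apply/eigenvalueP; exists v.
  apply/rowP => j; rewrite !mxE.
  under eq_bigr do rewrite !mxE eE.
  rewrite (bigID (mem S)) /=.
  case jS: (j \in S).
    rewrite big1 ?add0r; last by move=> i iS; rewrite iS mulr0.
    under eq_bigr => i iS do rewrite (negPf iS) /= mulr1.
    rewrite sumr_const.
    have -> : #|(fun i : 'I_n => i \notin S)| = (n - k + 1)%N.
      by rewrite -cSc; apply: eq_card => i; rewrite !inE.
    rewrite ccE -mulr_natr -/b.
    have -> : - Num.sqrt a * b = - Num.sqrt a * (Num.sqrt b * Num.sqrt b) by rewrite sb2.
    ring.
  rewrite [X in _ + X]big1 ?addr0; last by move=> i /negPf ->; rewrite mulr0.
  under eq_bigr => i iS do rewrite iS /= mulr1.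
  rewrite sumr_const cS ccE -mulr_natr -/a.
  have -> : Num.sqrt b * a = Num.sqrt b * (Num.sqrt a * Num.sqrt a) by rewrite sa2.
  ring.
have /card_gt0P [i0 i0S] : (0 < #|S|)%N by rewrite cS; lia.
apply/negP => /eqP /rowP /(_ i0); rewrite !mxE i0S => /eqP.
by rewrite sqrtr_eq0 leNgt b0.
Qed.
End Glue.

Lemma nrm_gt0 (R : rcfType) n (x : 'I_n -> R) : (exists i, x i != 0) -> 0 < nrm x.
Proof.
move=> [i0 xi0]; rewrite /nrm (bigD1 i0) //=.
have : 0 < x i0 ^+ 2 by rewrite lt0r sqrf_eq0 xi0 sqr_ge0.
have : 0 <= \sum_(i | i != i0) x i ^+ 2 by apply: sumr_ge0 => i _; apply: sqr_ge0.
lra.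
Qed.

Unset Implicit Arguments.

Theorem mainTheorem4 (R : rcfType) (k n : nat) (e : rel 'I_n) :
  simple_graph e ->
  (2 <= k)%N ->
  (11 * k - 4 <= n)%N ->
  ~ contains_kP3 k e ->
  - Num.sqrt (((k - 1) * (n - k + 1))%:R : R) <= least_eigenvalue (adjmx R e) /\
  (least_eigenvalue (adjmx R e) = - Num.sqrt (((k - 1) * (n - k + 1))%:R : R)
     <-> is_complete_bipartite (k - 1) e).
Proof.
move=> eS k2 kn nk.
have kn' : (k <= n)%N by lia.
have cE : Num.sqrt (((k - 1) * (n - k + 1))%:R : R) = cc R k n by [].
rewrite cE.
have srt : sorted <%R (rootsR (char_poly (adjmx R e))) by rewrite /rootsR; apply: sorted_roots.
have cp := cc_gt0 R k2 kn.
have lb : - cc R k n <= least_eigenvalue (adjmx R e).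
  rewrite /least_eigenvalue; case E: (rootsR (char_poly (adjmx R e))) => [|l s] /=.
    by rewrite oppr_le0 ltW.
  have : l \in rootsR (char_poly (adjmx R e)) by rewrite E mem_head.
  rewrite rootsR_char => /eig_quad [x [nz QE]].
  have N0 := nrm_gt0 nz.
  have := quad_le eS k2 kn nk x; rewrite QE => H.
  by rewrite -(ler_pM2r N0).
split => //; split.
  rewrite /least_eigenvalue; case E: (rootsR (char_poly (adjmx R e))) => [|l s] /= EQ.
    by move: cp; rewrite -oppr_lt0 -EQ ltxx.
  have : l \in rootsR (char_poly (adjmx R e)) by rewrite E mem_head.
  rewrite rootsR_char => /eig_quad [x [nz QE]].
  apply: (eq_struct eS k2 kn nk (x := x)) => //.
  by rewrite QE EQ.
move=> cb.
have r := kab_root R k2 kn' cb.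
have mem : - cc R k n \in rootsR (char_poly (adjmx R e)) by rewrite rootsR_char.
apply/eqP; rewrite eq_le lb andbT.
exact: head_le srt mem.
Qed.
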